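(* Assume (H1), (H2). Fix $\lambda>f'(0)$ and let $s_*$ be a $\lambda$-conjugate point. Let $\mathcal W$ be a Lagrangian plane transverse to $\mathbb E^u_-(s_*,\lambda)$ and, for $s$ near $s_*$, let $A(s):\mathbb E^u_-(s_*,\lambda)\to\mathcal W$ be the linear map whose graph is $\mathbb E^u_-(s,\lambda)$. If $v\in\mathbb E^u_-(s_*,\lambda)\cap\ell_*^{sand}$ and $p(\cdot,\lambda)$ is the solution of $q'=B(x,\lambda)q$ decaying as $x\to-\infty$ with $p(s_*,\lambda)=v=(p_1,p_2,p_3,p_4)(s_*,\lambda)$, then $$Q^{(1)}(v):=\frac{d}{ds}\omega(v,A(s)v)\Big|_{s=s_*}=\big(p_2(s_*;\lambda)\big)^2.$$
   Context: Fix real $\nu,\mu$ and $f(u)=\nu u^2-u^3-\mu u$. (H1): $\varphi$ is a smooth stationary solution of $u_t=-(1+\partial_x^2)^2u+f(u)$ with $\varphi\to0$ at $\pm\infty$. (H2): $f'(0)<0$. $B(x,\lambda)=\begin{pmatrix}0&0&0&1\\0&0&1&-2\\-\lambda-1+f'(\varphi(x))&0&0&0\\0&1&0&0\end{pmatrix}$; $\omega(u,v)=\langle u,Jv\rangle$, $J=\begin{pmatrix}0&I_2\\-I_2&0\end{pmatrix}$. $\mathbb E^u_-(x,\lambda)$ is the set of values $q(x)$ of solutions of $q'=B(y,\lambda)q$ with $q(y)\to0$ as $y\to-\infty$ (a 2-dimensional Lagrangian plane). $\ell_*^{sand}=\{q\in\mathbb R^4:q_1=q_4=0\}$; $s$ is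 a $\lambda$-conjugate point if $\mathbb E^u_-(s,\lambda)\cap\ell_*^{sand}\ne\{0\}$. For Lagrangian $\ell_0$ and $\mathcal W$ transverse, the graph map of a nearby Lagrangian $\ell$ is the unique linear $A:\ell_0\to\mathcal W$ with $\ell=\{v+Av:v\in\ell_0\}$. *)

(* Defs.v *)
From Stdlib Require Import Reals.
From Coquelicot Require Import Coquelicot.
Open Scope R_scope.

Record V4 := mkV4 { c1 : R; c2 : R; c3 : R; c4 : R }.

Definition vadd (u w : V4) : V4 :=
  mkV4 (c1 u + c1 w) (c2 u + c2 w) (c3 u + c3 w) (c4 u + c4 w).
Definition vscal (a : R) (u : V4) : V4 :=
  mkV4 (a * c1 u) (a * c2 u) (a * c3 u) (a * c4 u).
Definition v0 : V4 := mkV4 0 0 0 0.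

Definition fnl (nu mu u : R) : R := nu * u ^ 2 - u ^ 3 - mu * u.
Definition fnl' (nu mu u : R) : R := 2 * nu * u - 3 * u ^ 2 - mu.

(* (H1): phi smooth, stationary solution of u_t = -(1+d_x^2)^2 u + f(u),
   i.e. phi'''' + 2 phi'' + phi = f(phi), and phi -> 0 at +-oo. *)
Definition H1 (nu mu : R) (phi : R -> R) : Prop :=
  (forall (n : nat) (x : R), ex_derive_n phi n x) /\
  (forall x : R,
      - (Derive_n phi 4 x + 2 * Derive_n phi 2 x + phi x) + fnl nu mu (phi x) = 0) /\
  is_lim phi p_infty 0 /\ is_lim phi m_infty 0.

Definition H2 (nu mu : R) : Prop := fnl' nu mu 0 < 0.

Definition Bapp (nu mu : R) (phi : R -> R) (x lam : R) (q : V4) : V4 :=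
  mkV4 (c4 q)
       (c3 q - 2 * c4 q)
       ((- lam - 1 + fnl' nu mu (phi x)) * c1 q)
       (c2 q).

Definition is_sol (nu mu : R) (phi : R -> R) (lam : R) (q : R -> V4) : Prop :=
  forall x : R,
    is_derive (fun y => c1 (q y)) x (c1 (Bapp nu mu phi x lam (q x))) /\
    is_derive (fun y => c2 (q y)) x (c2 (Bapp nu mu phi x lam (q x))) /\
    is_derive (fun y => c3 (q y)) x (c3 (Bapp nu mu phi x lam (q x))) /\
    is_derive (fun y => c4 (q y)) x (c4 (Bapp nu mu phi x lam (q x))).

Definition decays_left (q : R -> V4) : Prop :=
  is_lim (fun y => c1 (q y)) m_infty 0 /\
  is_lim (fun y => c2 (q y)) m_infty 0 /\
  is_lim (fun y => c3 (q y)) m_infty 0 /\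
  is_lim (fun y => c4 (q y)) m_infty 0.

Definition Eu (nu mu : R) (phi : R -> R) (x lam : R) (w : V4) : Prop :=
  exists q : R -> V4, is_sol nu mu phi lam q /\ decays_left q /\ q x = w.

(* omega(u,v) = <u, J v>, J = [[0, I2], [-I2, 0]]. *)
Definition omega (u v : V4) : R :=
  c1 u * c3 v + c2 u * c4 v - c3 u * c1 v - c4 u * c2 v.

Definition ell_sand (q : V4) : Prop := c1 q = 0 /\ c4 q = 0.

Definition conjugate_point (nu mu : R) (phi : R -> R) (lam s : R) : Prop :=
  exists w : V4, w <> v0 /\ Eu nu mu phi s lam w /\ ell_sand w.

Definition lagrangian (W : V4 -> Prop) : Prop :=
  exists w1 w2 : V4,
    (forall a b : R, vadd (vscal a w1) (vscal b w2) = v0 -> a = 0 /\ b = 0) /\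
    (forall u : V4, W u <-> exists a b : R, u = vadd (vscal a w1) (vscal b w2)) /\
    (forall u w : V4, W u -> W w -> omega u w = 0).

Definition transverse (W E : V4 -> Prop) : Prop :=
  (forall u : V4, W u -> E u -> u = v0) /\
  (forall x : V4, exists u w : V4, E u /\ W w /\ x = vadd u w).

Definition graph_map (ell0 W ell : V4 -> Prop) (A0 : V4 -> V4) : Prop :=
  (forall u : V4, ell0 u -> W (A0 u)) /\
  (forall (a b : R) (u w : V4), ell0 u -> ell0 w ->
      A0 (vadd (vscal a u) (vscal b w)) = vadd (vscal a (A0 u)) (vscal b (A0 w))) /\
  (forall x : V4, ell x <-> exists u : V4, ell0 u /\ x = vadd u (A0 u)).

(* Main.v *)
Require Import Defs.
From Stdlib Require Import Reals Lra.
From Coquelicot Require Import Coquelicot.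
Open Scope R_scope.
Notation c1 := Defs.c1.

Lemma D_plus (f g : R -> R) x a b : is_derive f x a -> is_derive g x b -> is_derive (fun y => f y + g y) x (a+b).
Proof. intros; exact (is_derive_plus f g x a b H H0). Qed.
Lemma D_minus (f g : R -> R) x a b : is_derive f x a -> is_derive g x b -> is_derive (fun y => f y - g y) x (a-b).
Proof. intros; exact (is_derive_minus f g x a b H H0). Qed.
Lemma D_mult (f g : R -> R) x a b : is_derive f x a -> is_derive g x b -> is_derive (fun y => f y * g y) x (a * g x + f x * b).
Proof. intros; exact (is_derive_mult f g x a b H H0 Rmult_comm). Qed.
Lemma D_const (c : R) x : is_derive (fun _ => c) x 0.
Proof. exact (is_derive_const c x). Qed.
Lemma D_opp (f : R -> R) x a : is_derive f x a -> is_derive (fun y => - f y) x (- a).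
Proof. intros; exact (is_derive_opp f x a H). Qed.
Lemma D_eq (f : R -> R) x a b : is_derive f x a -> a = b -> is_derive f x b.
Proof. intros; subst; auto. Qed.

Ltac dstep := match goal with
 | |- is_derive (fun y => @?f y + @?g y) _ _ => apply (D_plus f g)
 | |- is_derive (fun y => @?f y - @?g y) _ _ => apply (D_minus f g)
 | |- is_derive (fun y => @?f y * @?g y) _ _ => apply (D_mult f g)
 | |- is_derive (fun y => ?c) _ _ => apply (D_const c)
 end.

Lemma omega_sol_der nu mu phi lam q r x :
  is_sol nu mu phi lam q -> is_sol nu mu phi lam r ->
  is_derive (fun y => omega (q y) (r y)) x 0.
Proof.
  intros Hq Hr. destruct (Hq x) as (q1&q2&q3&q4). destruct (Hr x) as (r1&r2&r3&r4).
  unfold omega. eapply D_eq.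
  repeat dstep; try eassumption.
  simpl. ring.
Qed.

Lemma lim_mult0 (f g : R -> R) : is_lim f m_infty 0 -> is_lim g m_infty 0 -> is_lim (fun y => f y * g y) m_infty 0.
Proof.
  intros Hf Hg. pose proof (is_lim_mult f g m_infty 0 0 Hf Hg) as H.
  simpl in H. rewrite Rmult_0_l in H. apply H. exact I.
Qed.

Lemma omega_lag nu mu phi lam q r x :
  is_sol nu mu phi lam q -> is_sol nu mu phi lam r ->
  decays_left q -> decays_left r -> omega (q x) (r x) = 0.
Proof.
  intros Hq Hr Dq Dr.
  set (h := fun y => omega (q y) (r y)).
  assert (Hc : forall y, h y = h 0).
  { intro y. destruct (MVT_cor4 h (fun _ => 0) 0 (Rabs (y - 0))) with (b := y) as (c & Hc & _).
    - intros; unfold h; eapply omega_sol_der; eauto.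
    - lra.
    - lra. }
  assert (Hl : is_lim h m_infty 0).
  { destruct Dq as (a1&a2&a3&a4). destruct Dr as (b1&b2&b3&b4).
    unfold h, omega. replace 0 with (0+0-0-0) by ring.
    apply is_lim_minus'. apply is_lim_minus'. apply is_lim_plus'.
    all: apply lim_mult0; auto. }
  assert (Hl2 : is_lim (fun _ => h 0) m_infty 0).
  { eapply is_lim_ext. 2: exact Hl. intro; apply Hc. }
  pose proof (is_lim_unique _ _ _ Hl2) as E. rewrite Lim_const in E.
  change (omega (q x) (r x)) with (h x). rewrite Hc. injection E; auto.
Qed.

Lemma loc_ne (a : R) : a <> 0 -> locally a (fun y => y <> 0).
Proof.
  intros Ha. assert (Hp : 0 < Rabs a) by (apply Rabs_pos_lt; auto).
  exists (mkposreal _ Hp). intros y Hy. change (Rabs (y - a) < Rabs a) in Hy.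
  intro E; subst. rewrite Rminus_0_l, Rabs_Ropp in Hy. lra.
Qed.
Lemma loc_ball (a d : R) : 0 < d -> locally a (fun y => Rabs (y - a) < d).
Proof. intros Hd. exists (mkposreal _ Hd). intros y Hy. exact Hy. Qed.

Lemma E_plus (f g : R -> R) x : ex_derive f x -> ex_derive g x -> ex_derive (fun y => f y + g y) x.
Proof. intros; exact (ex_derive_plus f g x H H0). Qed.
Lemma E_minus (f g : R -> R) x : ex_derive f x -> ex_derive g x -> ex_derive (fun y => f y - g y) x.
Proof. intros; exact (ex_derive_minus f g x H H0). Qed.
Lemma E_mult (f g : R -> R) x : ex_derive f x -> ex_derive g x -> ex_derive (fun y => f y * g y) x.
Proof. intros; exact (ex_derive_mult f g x H H0). Qed.
Lemma E_div (f g : R -> R) x : ex_derive f x -> ex_derive g x -> g x <> 0 -> ex_derive (fun y => f y / g y) x.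
Proof. intros; exact (ex_derive_div f g x H H0 H1). Qed.
Lemma E_opp (f : R -> R) x : ex_derive f x -> ex_derive (fun y => - f y) x.
Proof. intros; exact (ex_derive_opp f x H). Qed.
Lemma E_const (c : R) x : ex_derive (fun _ => c) x.
Proof. exact (ex_derive_const c x). Qed.

Ltac estep := match goal with
 | |- ex_derive (fun y => @?f y + @?g y) _ => apply (E_plus f g)
 | |- ex_derive (fun y => @?f y - @?g y) _ => apply (E_minus f g)
 | |- ex_derive (fun y => @?f y * @?g y) _ => apply (E_mult f g)
 | |- ex_derive (fun y => @?f y / @?g y) _ => apply (E_div f g)
 | |- ex_derive (fun y => - @?f y) _ => apply (E_opp f)
 | |- ex_derive (fun y => ?c) _ => apply (E_const c)
 end.

Lemma sol_ex nu mu phi lam q x : is_sol nu mu phi lam q ->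
  ex_derive (fun s => c1 (q s)) x /\ ex_derive (fun s => c2 (q s)) x /\
  ex_derive (fun s => c3 (q s)) x /\ ex_derive (fun s => c4 (q s)) x.
Proof.
  intros H. destruct (H x) as (h1&h2&h3&h4).
  repeat split; eexists; eassumption.
Qed.

Lemma Eu_lin nu mu phi x lam u w : Eu nu mu phi x lam u -> Eu nu mu phi x lam w -> omega u w = 0.
Proof.
  intros (q & Hq & Dq & <-) (r & Hr & Dr & <-). eapply omega_lag; eauto.
Qed.

Lemma nondeg (z : V4) : (forall x, omega x z = 0) -> z = v0.
Proof.
  intros H. destruct z as [z1 z2 z3 z4].
  pose proof (H (mkV4 1 0 0 0)) as H1. pose proof (H (mkV4 0 1 0 0)) as H2.
  pose proof (H (mkV4 0 0 1 0)) as H3. pose proof (H (mkV4 0 0 0 1)) as H4.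
  unfold omega in *; simpl in *. unfold v0. f_equal; lra.
Qed.

Theorem lemma3 (nu mu : R) (phi : R -> R) :
  H1 nu mu phi -> H2 nu mu ->
  forall lam s_star : R,
    fnl' nu mu 0 < lam ->
    conjugate_point nu mu phi lam s_star ->
    forall (W : V4 -> Prop) (A : R -> V4 -> V4),
      lagrangian W ->
      transverse W (Eu nu mu phi s_star lam) ->
      (exists delta : R, 0 < delta /\
         forall s : R, Rabs (s - s_star) < delta ->
           graph_map (Eu nu mu phi s_star lam) W (Eu nu mu phi s lam) (A s)) ->
      forall (v : V4) (p : R -> V4),
        Eu nu mu phi s_star lam v -> ell_sand v ->
        is_sol nu mu phi lam p -> decays_left p -> p s_star = v ->
        is_derive (fun s => omega v (A s v)) s_star ((c2 (p s_star)) ^ 2).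
Proof.
  intros _ _ lam S _ _ W A (w1 & w2 & Hind & Hrep & Hlag) (Hti & Hts) (del & Hdel & Hgm)
    v p Ev Hsand Hp Dp HpS.
  set (E := Eu nu mu phi S lam) in *.
  destruct (Classical_Prop.classic (v = v0)) as [Hv0 | Hv0].
  { rewrite HpS, Hv0. eapply D_eq. eapply is_derive_ext. 2: apply (D_const 0).
    intro t. unfold omega; simpl. ring. simpl; ring. }
  set (l1 := omega v w1). set (l2 := omega v w2).
  set (z := vadd (vscal (- l2) w1) (vscal l1 w2)).
  assert (Hz : forall u, omega u z = l1 * omega u w2 - l2 * omega u w1).
  { intro u; unfold z, omega; simpl; ring. }
  assert (He2 : exists e2, E e2 /\ omega e2 z <> 0).
  { apply Classical_Prop.NNPP. intro Hn.
    assert (H0 : forall e, E e -> omega e z = 0).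
    { intros e He. apply Classical_Prop.NNPP. intro Hne. apply Hn. exists e; auto. }
    assert (HWz : W z) by (apply Hrep; exists (-l2), l1; reflexivity).
    assert (Hall : forall x, omega x z = 0).
    { intro x. destruct (Hts x) as (u & w & Eu0 & Ww & ->).
      replace (omega (vadd u w) z) with (omega u z + omega w z) by (unfold omega; simpl; ring).
      rewrite H0, (Hlag w z); auto; ring. }
    apply nondeg in Hall. destruct (Hind (-l2) l1) as [Ha Hb]. exact Hall.
    apply Hv0. apply nondeg. intro x.
    replace (omega x v) with (- omega v x) by (unfold omega; ring).
    destruct (Hts x) as (u & w & Eu0 & Ww & ->).
    replace (omega v (vadd u w)) with (omega v u + omega v w) by (unfold omega; simpl; ring).
    rewrite (Eu_lin _ _ _ _ _ v u Ev Eu0).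
    destruct (proj1 (Hrep w) Ww) as (a & b & ->).
    replace (omega v (vadd (vscal a w1) (vscal b w2))) with (a * l1 + b * l2)
      by (unfold l1, l2, omega; simpl; ring).
    assert (l2 = 0) by lra. rewrite Hb, H. ring. }
  destruct He2 as (e2 & Ee2 & Hze2).
  destruct Ee2 as (r & Hr & Dr & HrS).

  set (N11 := fun s => omega (p s) w1). set (N12 := fun s => omega (p s) w2).
  set (N21 := fun s => omega (r s) w1). set (N22 := fun s => omega (r s) w2).
  set (b1 := fun s => - omega (p s) v). set (b2 := fun s => - omega (r s) v).
  set (D := fun s => N11 s * N22 s - N12 s * N21 s).
  set (X := fun s => (b1 s * N22 s - N12 s * b2 s) / D s).
  set (Y := fun s => (N11 s * b2 s - N21 s * b1 s) / D s).
  assert (HDS : D S <> 0).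
  { replace (D S) with (omega e2 z). exact Hze2.
    rewrite Hz. unfold D, N11, N12, N21, N22. rewrite HpS, HrS. fold l1 l2. ring. }
  destruct (sol_ex _ _ _ _ p S Hp) as (p1&p2&p3&p4).
  destruct (sol_ex _ _ _ _ r S Hr) as (r1&r2&r3&r4).
  assert (Hexb : ex_derive N11 S /\ ex_derive N12 S /\ ex_derive N21 S /\ ex_derive N22 S
     /\ ex_derive b1 S /\ ex_derive b2 S).
  { unfold N11, N12, N21, N22, b1, b2, omega.
    repeat split; repeat estep; assumption. }
  destruct Hexb as (e11&e12&e21&e22&eb1&eb2).
  assert (HDd : ex_derive D S) by (unfold D; repeat estep; assumption).
  assert (HXd : ex_derive X S) by (unfold X; repeat estep; assumption).
  assert (HYd : ex_derive Y S) by (unfold Y; repeat estep; assumption).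
  assert (Hb1 : b1 S = 0) by (unfold b1; rewrite HpS; unfold omega; ring).
  assert (Hb2 : b2 S = 0).
  { unfold b2. rewrite <- HpS, (omega_lag _ _ _ _ r p S Hr Hp Dr Dp). ring. }
  assert (HXS : X S = 0) by (unfold X; rewrite Hb1, Hb2; unfold Rdiv; ring).
  assert (HYS : Y S = 0) by (unfold Y; rewrite Hb1, Hb2; unfold Rdiv; ring).
  set (Wk := fun (k : V4 -> R) s => k v + X s * k w1 + Y s * k w2).
  assert (HWd : forall k, ex_derive (Wk k) S).
  { intro k. unfold Wk. repeat estep; auto. }
  set (F := fun s => - ((c1 (p s) - c1 v) * Wk c3 s + (c2 (p s) - c2 v) * Wk c4 s
                       - (c3 (p s) - c3 v) * Wk c1 s - (c4 (p s) - c4 v) * Wk c2 s)).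
  assert (HF : is_derive F S ((c2 (p S)) ^ 2)).
  { destruct (Hp S) as (d1&d2&d3&d4).
    pose proof (fun k => Derive_correct _ _ (HWd k)) as HW.
    unfold F. eapply D_eq.
    apply (D_opp (fun s => _)).
    repeat dstep; first [eassumption | apply HW | idtac].
    unfold Wk. rewrite HXS, HYS, HpS. destruct Hsand as [s1 s4].
    simpl. rewrite s1, s4. ring. }
  eapply is_derive_ext_loc. 2: exact HF.
  assert (Hloc : locally S (fun s => Rabs (s - S) < del /\ D s <> 0)).
  { apply filter_and. apply loc_ball; auto.
    apply (ex_derive_continuous D S HDd (fun y => y <> 0)). apply loc_ne; auto. }
  eapply filter_imp. 2: exact Hloc.
  intros s (Hs & HDs). destruct (Hgm s Hs) as (GW & _ & Geq).
  assert (Hws : Eu nu mu phi s lam (vadd v (A s v))) by (apply Geq; exists v; auto).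
  destruct (proj1 (Hrep _) (GW v Ev)) as (a & b & Hab).
  pose proof (omega_lag _ _ _ _ p p s Hp Hp Dp Dp) as _.
  destruct Hws as (q & Hq & Dq & Hqs).
  pose proof (omega_lag _ _ _ _ p q s Hp Hq Dp Dq) as Ep.
  pose proof (omega_lag _ _ _ _ r q s Hr Hq Dr Dq) as Er.
  rewrite Hqs, Hab in Ep, Er.
  assert (Eq1 : a * N11 s + b * N12 s = b1 s) by (unfold N11, N12, b1; unfold omega in *; simpl in *; lra).
  assert (Eq2 : a * N21 s + b * N22 s = b2 s) by (unfold N21, N22, b2; unfold omega in *; simpl in *; lra).
  assert (Ha : a = X s).
  { apply (Rmult_eq_reg_r (D s)); auto. unfold X. field_simplify; auto.
    unfold D. nra. }
  assert (Hb : b = Y s).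
  { apply (Rmult_eq_reg_r (D s)); auto. unfold Y. field_simplify; auto.
    unfold D. nra. }
  rewrite Hab. unfold F, Wk. rewrite <- Ha, <- Hb.
  unfold omega in Ep |- *. simpl in *. lra.
Qed.
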